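(* Using the principal branches of $\sqrt{\cdot}$ and $\arctan$, for $|z-1|<1$, \[ \frac{\arctan\sqrt z}{\sqrt z}=\sum_{n=0}^{\infty}\frac{(-1)^n}{2^n}\Bigg[(2n-1)!!\,\frac{\pi}{4}+\frac{n!}{2^n}\sum_{k=1}^{n}(-1)^k\binom{2n-k}{n}\frac{2^{k/2}}{k}\sin\frac{3k\pi}{4}\Bigg]\frac{(z-1)^n}{n!}. \]
   Context: $(2n-1)!!=1\cdot3\cdots(2n-1)$ for $n\ge1$, and $(-1)!!=1$. An empty sum is $0$. *)

(* Defs.v *)
From Stdlib Require Import Reals Lra.
From Coquelicot Require Import Coquelicot.
Open Scope R_scope.

(* Principal argument Arg z in (-PI, PI], with Arg 0 = 0. *)
Definition Carg (z : C) : R :=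
  let x := Re z in let y := Im z in
  if Rlt_dec 0 x then atan (y / x)
  else if Rlt_dec x 0 then
    (if Rle_dec 0 y then atan (y / x) + PI else atan (y / x) - PI)
  else if Rlt_dec 0 y then PI / 2
  else if Rlt_dec y 0 then - (PI / 2) else 0.

Definition Clog (z : C) : C := (ln (Cmod z), Carg z).

Definition Csqrt (z : C) : C :=
  (sqrt (Cmod z) * cos (Carg z / 2), sqrt (Cmod z) * sin (Carg z / 2)).

Definition Catan (w : C) : C :=
  Cmult (Cdiv Ci (RtoC 2))
    (Cminus (Clog (Cminus (RtoC 1) (Cmult Ci w)))
            (Clog (Cplus (RtoC 1) (Cmult Ci w)))).

(* (2n-1)!! = 1*3*...*(2n-1), with (-1)!! = 1. *)
Fixpoint odd_dfact (n : nat) : nat :=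
  match n with
  | O => 1%nat
  | S m => ((2 * m + 1) * odd_dfact m)%nat
  end.

Fixpoint sum_1_to (f : nat -> R) (n : nat) : R :=
  match n with
  | O => 0
  | S m => sum_1_to f m + f (S m)
  end.

Definition coef3p2 (n : nat) : R :=
  ((-1) ^ n / 2 ^ n) *
  (INR (odd_dfact n) * (PI / 4) +
   INR (Factorial.fact n) / 2 ^ n *
   sum_1_to (fun k =>
      (-1) ^ k * Binomial.C (2 * n - k) n * Rpower 2 (INR k / 2) / INR k
      * sin (3 * INR k * PI / 4)) n)
  / INR (Factorial.fact n).

(* Main.v *)
Require Import Defs.
From Stdlib Require Import Reals Lra Lia.
From Coquelicot Require Import Coquelicot.
Open Scope R_scope.

Fixpoint sm (f : nat -> R) (n : nat) : R :=
  match n with O => 0 | S m => sm f m + f m end.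

Lemma sm_ext f g n : (forall k, (k < n)%nat -> f k = g k) -> sm f n = sm g n.
Proof. induction n; simpl; intros H; [reflexivity|]. rewrite IHn by (intros; apply H; lia). rewrite H by lia. reflexivity. Qed.

Lemma sm_S f n : sm f (S n) = sm f n + f n.
Proof. reflexivity. Qed.

Lemma sm_shift f n : sm f (S n) = f O + sm (fun k => f (S k)) n.
Proof. induction n; simpl in *. lra. rewrite IHn. lra. Qed.

Lemma sm_plus f g n : sm (fun k => f k + g k) n = sm f n + sm g n.
Proof. induction n; simpl; lra. Qed.

Lemma sm_minus f g n : sm (fun k => f k - g k) n = sm f n - sm g n.
Proof. induction n; simpl; lra. Qed.

Lemma sm_scal c f n : sm (fun k => c * f k) n = c * sm f n.
Proof. induction n; simpl; try rewrite IHn; ring. Qed.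

Lemma sum_1_to_sm f n : sum_1_to f n = sm (fun k => f (S k)) n.
Proof. induction n; simpl; auto. rewrite IHn; reflexivity. Qed.

Definition B (n k : nat) : R := if (k <=? n)%nat then Binomial.C n k else 0.

Lemma B_le n k : (k <= n)%nat -> B n k = Binomial.C n k.
Proof. intros H; unfold B; apply Nat.leb_le in H; rewrite H; reflexivity. Qed.

Lemma B_gt n k : (n < k)%nat -> B n k = 0.
Proof. intros H; unfold B. destruct (Nat.leb_spec k n); [lia|reflexivity]. Qed.

Lemma B_nn n : B n n = 1.
Proof. rewrite B_le by lia. apply C_n_n. Qed.

Lemma B_pascal a b : B (S a) (S b) = B a b + B a (S b).
Proof.
  destruct (Nat.lt_trichotomy b a) as [H|[H|H]].
  - rewrite !B_le by lia. rewrite pascal; auto.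
  - subst. rewrite !B_nn, B_gt by lia. ring.
  - rewrite !B_gt by lia. ring.
Qed.

Lemma B_fact n k : (k <= n)%nat ->
  B n k = INR (Factorial.fact n) / (INR (Factorial.fact k) * INR (Factorial.fact (n - k))).
Proof. intros H; rewrite B_le by auto. reflexivity. Qed.

Lemma fact_pos n : 0 < INR (Factorial.fact n).
Proof. apply lt_0_INR, Factorial.lt_O_fact. Qed.

Lemma B_mid m : B (2*m+2) (m+1) = 2 * B (2*m+1) m.
Proof.
  replace (2*m+2)%nat with (S (2*m+1)) by lia. replace (m+1)%nat with (S m) by lia.
  rewrite B_pascal.
  rewrite !B_fact by lia.
  replace (2*m+1 - m)%nat with (S m) by lia.
  replace (2*m+1 - S m)%nat with m by lia.
  field. split; apply Rgt_not_eq, fact_pos.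
Qed.

(* u, v : real and imaginary parts of (1-i)^k *)
Fixpoint uv (k : nat) : R * R :=
  match k with O => (1, 0) | S j => (fst (uv j) + snd (uv j), snd (uv j) - fst (uv j)) end.
Definition u k := fst (uv k).
Definition v k := snd (uv k).
Lemma u_S k : u (S k) = u k + v k. Proof. reflexivity. Qed.
Lemma v_S k : v (S k) = v k - u k. Proof. reflexivity. Qed.
Lemma u_0 : u 0 = 1. Proof. reflexivity. Qed.
Lemma v_0 : v 0 = 0. Proof. reflexivity. Qed.

Lemma lemL (e : nat -> R) m :
  sm (fun k => B (2*m+2-k) (m+1) * (e (S k) - e k)) (m+2)
  = sm (fun k => B (2*m-k) m * e (S (S k))) (m+1) + B (2*m+1) m * (e 1%nat - 2 * e 0%nat).
Proof.
  rewrite (sm_ext _ (fun k => B (2*m+2-k) (m+1) * e (S k) - B (2*m+2-k) (m+1) * e k))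
    by (intros; ring).
  rewrite sm_minus.
  replace (m+2)%nat with (S (S m)) by lia.
  assert (HA : sm (fun k => B (2*m+2-k) (m+1) * e (S k)) (S (S m)) =
     sm (fun k => B (2*m+1-k) m * e (S k) + B (2*m+1-k) (m+1) * e (S k)) (S m) + e (S (S m))).
  { rewrite (sm_S _ (S m)). f_equal.
    - apply sm_ext; intros k Hk. replace (2*m+2-k)%nat with (S (2*m+1-k)) by lia.
      replace (m+1)%nat with (S m) by lia. rewrite B_pascal. ring.
    - replace (2*m+2 - S m)%nat with (m+1)%nat by lia. rewrite B_nn. ring. }
  assert (HB : sm (fun k => B (2*m+2-k) (m+1) * e k) (S (S m)) =
     B (2*m+2) (m+1) * e O + sm (fun k => B (2*m+1-k) (m+1) * e (S k)) (S m)).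
  { rewrite sm_shift. replace (2*m+2-0)%nat with (2*m+2)%nat by lia. f_equal. apply sm_ext; intros k Hk.
    replace (2*m+2 - S k)%nat with (2*m+1-k)%nat by lia. reflexivity. }
  rewrite HA, HB, sm_plus, B_mid.
  rewrite sm_shift.
  replace (2*m+1-0)%nat with (2*m+1)%nat by lia.
  rewrite (sm_ext (fun k => B (2*m+1 - S k) m * e (S (S k))) (fun k => B (2*m - k) m * e (S (S k))))
    by (intros; f_equal; f_equal; lia).
  replace (m+1)%nat with (S m) by lia. rewrite (sm_S (fun k => B (2*m-k) m * e (S (S k))) m).
  replace (2*m - m)%nat with m by lia. rewrite B_nn.
  ring.
Qed.

Definition Y n := sm (fun j => B (2*n - j) n * (u j + v j)) (S n).

Lemma Y_S m : Y (S m) = 2 * Y m.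
Proof.
  pose (e := fun k => u k - v k).
  assert (H := lemL e m).
  unfold Y.
  replace (S (S m)) with (m+2)%nat by lia.
  rewrite (sm_ext _ (fun k => B (2*m+2-k) (m+1) * (e (S k) - e k))).
  2:{ intros k Hk. unfold e. rewrite u_S, v_S. f_equal. f_equal; lia. ring. }
  rewrite H. unfold e.
  replace (u 1%nat - v 1%nat - 2 * (u 0%nat - v 0%nat)) with 0
    by (rewrite u_S, v_S, u_0, v_0; ring).
  replace (S m) with (m+1)%nat by lia. rewrite <- sm_scal.
  rewrite Rmult_0_r, Rplus_0_r. apply sm_ext. intros k Hk.
  repeat (rewrite u_S || rewrite v_S). ring.
Qed.

Lemma Y_val n : Y n = 2 ^ n.
Proof. induction n. unfold Y; simpl. rewrite B_nn, u_0, v_0. ring.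
  rewrite Y_S, IHn. simpl. ring. Qed.
Definition Sv n := sm (fun j => B (2*n - S j) n * v (S j) / INR (S j)) n.

Lemma INR_fact_S k : INR (Factorial.fact (S k)) = INR (S k) * INR (Factorial.fact k).
Proof. change (Factorial.fact (S k)) with (S k * Factorial.fact k)%nat. apply mult_INR. Qed.

Lemma termwise_lt j m :
  let n := (j + m + 1)%nat in
  INR (n+1) * B (2*n+1-j) (n+1) / INR (j+1) - 2*(2*INR n+1) * B (2*n-1-j) n / INR (j+1)
  = B (2*n-1-j) (n-1) - B (2*n-1-j) n.
Proof.
  intros n; unfold n.
  rewrite !B_fact by lia.
  replace (2 * (j + m + 1) + 1 - j)%nat with (S (S (j + 2*m+1))) by lia.
  replace (2 * (j + m + 1) - 1 - j)%nat with (j + 2*m+1)%nat by lia.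
  replace (j + m + 1 + 1)%nat with (S (S (j+m))) by lia.
  replace (j + m + 1 - 1)%nat with (j+m)%nat by lia.
  replace (S (S (j + 2 * m + 1)) - S (S (j + m)))%nat with (S m) by lia.
  replace (j + 2 * m + 1 - (j + m + 1))%nat with m by lia.
  replace (j + 2 * m + 1 - (j + m))%nat with (S m) by lia.
  replace (j+m+1)%nat with (S (j+m)) by lia.
  rewrite !INR_fact_S.
  replace (j+1)%nat with (S j) by lia.
  rewrite !S_INR, !plus_INR, !mult_INR. simpl (INR 2).
  assert (H1 := fact_pos (j + 2*m+1)). assert (H2 := fact_pos (j+m)).
  assert (H3 := fact_pos m). assert (H4 := pos_INR j). assert (H5 := pos_INR m).
  change (INR 1) with 1.
  field. repeat split; lra.
Qed.

Lemma termwise n j : (1 <= n)%nat -> (j <= n)%nat ->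
  INR (S n) * (B (2 * S n - S j) (S n) * v (S j) / INR (S j))
  - 2*(2*INR n+1) * (B (2*n - S j) n * v (S j) / INR (S j))
  = (B (2*n-1-j) (n-1) - B (2*n-1-j) n) * v (S j).
Proof.
  intros Hn Hj.
  destruct (Nat.eq_dec j n) as [->|Hne].
  - replace (2 * S n - S n)%nat with (S n) by lia.
    replace (2*n - S n)%nat with (n-1)%nat by lia.
    replace (2*n-1-n)%nat with (n-1)%nat by lia.
    rewrite !B_nn, (B_gt (n-1) n) by lia.
    field. apply not_0_INR; lia.
  - destruct (Nat.le_exists_sub (S j) n) as [m [Hm _]]; [lia|].
    assert (E := termwise_lt j m). cbv zeta in E.
    replace n with (j + m + 1)%nat in * by lia.
    replace (2 * S (j + m + 1) - S j)%nat with (2 * (j + m + 1) + 1 - j)%nat by lia.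
    replace (2 * (j + m + 1) - S j)%nat with (2 * (j + m + 1) - 1 - j)%nat by lia.
    replace (S (j+m+1)) with (j+m+1+1)%nat by lia.
    replace (S j) with (j+1)%nat by lia.
    rewrite <- E. rewrite !plus_INR. simpl (INR 1). field.
    assert (H4 := pos_INR j). lra.
Qed.

Lemma Sv_rec n : INR (S n) * Sv (S n) = 2*(2*INR n+1) * Sv n - 2^n.
Proof.
  destruct n as [|p].
  - unfold Sv. simpl sm. replace (2*1 - 1)%nat with 1%nat by lia. rewrite B_nn.
    simpl. unfold v; simpl. field.
  - set (n := S p).
    assert (Hn : (1 <= n)%nat) by (unfold n; lia).
    assert (E1 : 2*(2*INR n+1) * Sv n =
       sm (fun j => 2*(2*INR n+1) * (B (2*n - S j) n * v (S j) / INR (S j))) (S n)).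
    { unfold Sv. rewrite sm_S, sm_scal.
      replace (2*n - S n)%nat with (n-1)%nat by lia. rewrite (B_gt (n-1) n) by lia.
      unfold Rdiv; ring. }
    assert (E2 : INR (S n) * Sv (S n) =
       sm (fun j => INR (S n) * (B (2 * S n - S j) (S n) * v (S j) / INR (S j))) (S n)).
    { unfold Sv. rewrite sm_scal. reflexivity. }
    rewrite E1, E2.
    match goal with |- ?X = ?Y - ?Z => enough (X - Y = - Z) by lra end.
    rewrite <- sm_minus.
    rewrite (sm_ext _ (fun j => (B (2*n-1-j) (n-1) - B (2*n-1-j) n) * v (S j))).
    2:{ intros j Hj. apply termwise; lia. }
    rewrite (sm_ext _ (fun j => B (2*n-j) n * (v j - u j) - 2 * (B (2*n-1-j) n * v (S j)))).
    2:{ intros j Hj. replace (2*n-j)%nat with (S (2*n-1-j)) by lia.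
        assert (HP : forall a, B (S a) n = B a (n-1) + B a n).
        { intro a. unfold n. rewrite B_pascal. replace (S p - 1)%nat with p by lia. reflexivity. }
        rewrite HP, v_S. ring. }
    rewrite sm_minus, sm_scal.
    assert (E3 : sm (fun j => B (2*n-1-j) n * v (S j)) (S n) = sm (fun j => B (2*n-j) n * v j) (S n)).
    { rewrite sm_S. replace (2*n-1-n)%nat with (n-1)%nat by lia. rewrite (B_gt (n-1) n) by lia.
      rewrite (sm_shift (fun j => B (2*n-j) n * v j)). rewrite v_0.
      rewrite Rmult_0_r, Rmult_0_l, Rplus_0_r, Rplus_0_l.
      apply sm_ext. intros j Hj. f_equal. f_equal. lia. }
    rewrite E3.
    assert (E4 := Y_val n). unfold Y in E4. rewrite <- E4.
    rewrite <- sm_scal, <- sm_minus. rewrite <- (Rmult_1_l (sm (fun j => B (2*n-j) n * (u j + v j)) (S n))). rewrite Ropp_mult_distr_l, <- sm_scal. apply sm_ext. intros j Hj. ring.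
Qed.

Lemma trig_uv k :
  (-1)^k * Rpower 2 (INR k / 2) * cos (3 * INR k * PI / 4) = u k /\
  (-1)^k * Rpower 2 (INR k / 2) * sin (3 * INR k * PI / 4) = v k.
Proof.
  induction k as [|k [IHu IHv]].
  - simpl. replace (0/2) with 0 by field. rewrite Rpower_O by lra.
    replace (3*0*PI/4) with 0 by field. rewrite cos_0, sin_0. unfold u, v; simpl. split; ring.
  - rewrite S_INR.
    replace ((INR k + 1)/2) with (INR k / 2 + /2) by field.
    rewrite Rpower_plus, Rpower_sqrt by lra.
    replace (3 * (INR k + 1) * PI / 4) with (3 * INR k * PI / 4 + 3 * (PI/4)) by field.
    rewrite cos_plus, sin_plus, cos_3PI4, sin_3PI4.
    rewrite u_S, v_S, <- IHu, <- IHv. simpl pow.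
    assert (Hs := sqrt2_neq_0).
    split; field; auto.
Qed.

Lemma v_trig k : (-1)^k * Rpower 2 (INR k / 2) * sin (3 * INR k * PI / 4) = v k.
Proof. apply trig_uv. Qed.

Definition K n := INR (odd_dfact n) / (2^n * INR (Factorial.fact n)) * (PI/4) + Sv n / 4^n.

Lemma Sv_stmt n :
  sum_1_to (fun k =>
      (-1) ^ k * Binomial.C (2 * n - k) n * Rpower 2 (INR k / 2) / INR k
      * sin (3 * INR k * PI / 4)) n = Sv n.
Proof.
  rewrite sum_1_to_sm. unfold Sv. apply sm_ext. intros j Hj.
  rewrite <- B_le by lia. rewrite <- (v_trig (S j)). field. apply not_0_INR; lia.
Qed.

Lemma coef_K n : coef3p2 n = (-1)^n * K n.
Proof.
  unfold coef3p2, K. rewrite Sv_stmt.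
  assert (H1 := fact_pos n). assert (H2 : 0 < 2^n) by (apply pow_lt; lra).
  replace (4^n) with (2^n*2^n) by (rewrite <- Rpow_mult_distr; f_equal; ring).
  field. lra.
Qed.

Lemma K_rec n : 2 * INR (S n) * K (S n) = (2 * INR n + 1) * K n - / 2 ^ (S n).
Proof.
  unfold K.
  assert (HS := Sv_rec n).
  assert (H1 := fact_pos n). assert (H2 : 0 < 2^n) by (apply pow_lt; lra).
  assert (H3 := pos_INR n).
  rewrite INR_fact_S. change (odd_dfact (S n)) with ((2 * n + 1) * odd_dfact n)%nat.
  rewrite mult_INR, plus_INR, mult_INR. simpl (INR 2). simpl (INR 1).
  replace (4^(S n)) with (4 * 4^n) by reflexivity.
  replace (4^n) with (2^n*2^n) by (rewrite <- Rpow_mult_distr; f_equal; ring).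
  simpl (2 ^ S n).
  replace (Sv (S n)) with ((2 * (2 * INR n + 1) * Sv n - 2 ^ n) / INR (S n)).
  2:{ rewrite <- HS. field. apply not_0_INR; lia. }
  rewrite S_INR. field. lra.
Qed.

Definition g (n : nat) (t : R) : R := t ^ (2*n) / (1 + t^2) ^ (S n).

Lemma gq_nz t n : (1 + t*(t*1)) * (1 + t*(t*1))^n <> 0.
Proof. change ((1 + t*(t*1))^(S n) <> 0). apply pow_nonzero. nra. Qed.

Lemma g_cont n t : continuous (g n) t.
Proof.
  apply (@ex_derive_continuous R_AbsRing R_NormedModule). unfold g. auto_derive.
  change ((1 + t*(t*1))^(S n) <> 0). apply pow_nonzero. nra.
Qed.

Lemma h_deriv n t : is_derive (fun t => t ^ (2*n+1) / (1 + t^2) ^ (S n)) t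
   ((2 * INR n + 1) * g n t - (2 * INR (S n)) * g (S n) t).
Proof.
  auto_derive. change ((1 + t*(t*1))^(S n) <> 0). apply pow_nonzero. nra.
  replace (match n with | 0%nat => 1 | S _ => INR n + 1 end) with (INR n + 1)
    by (destruct n; simpl; ring).
  replace (n + (n + 0) + 1)%nat with (S (2*n)) by lia.
  unfold g. replace (2 * S n)%nat with (S (S (2*n))) by lia.
  simpl pred. rewrite S_INR, mult_INR. simpl (INR 2).
  assert (0 < 1 + t^2) by nra.
  assert (0 < (1 + t^2)^n) by (apply pow_lt; lra).
  simpl pow. simpl pow in H, H0. rewrite S_INR. match goal with |- ?a = ?b => change (@eq R a b) end. field. lra.
Qed.

Lemma g_int n : is_RInt (g n) 0 1 (K n).
Proof.
  induction n.
  - assert (H : is_RInt (g 0) 0 1 (minus (atan 1) (atan 0))).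
    { apply (is_RInt_derive atan (g 0)).
      - intros t _. replace (g 0 t) with (/ (1 + t²)). apply is_derive_atan.
        unfold g, Rsqr. simpl. field. nra.
      - intros t _. apply g_cont. }
    replace (K 0) with (minus (atan 1) (atan 0)); auto.
    rewrite atan_1, atan_0. unfold K, Sv. simpl. unfold minus, plus, opp; simpl. field.
  - assert (HD : is_RInt (fun t => (2 * INR n + 1) * g n t - (2 * INR (S n)) * g (S n) t) 0 1
       (minus (1 ^ (2*n+1) / (1 + 1^2) ^ (S n)) (0 ^ (2*n+1) / (1 + 0^2) ^ (S n)))).
    { apply (is_RInt_derive (fun t => t ^ (2*n+1) / (1 + t^2) ^ (S n))).
      - intros t _. apply h_deriv.
      - intros t _. apply (@ex_derive_continuous R_AbsRing R_NormedModule).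
        unfold g. auto_derive. assert (Hq := gq_nz t n). assert (Hq' := gq_nz t (S n)).
        simpl pow in Hq'. tauto. }
    assert (HC := is_RInt_scal _ _ _ (2 * INR n + 1) _ IHn).
    assert (HM := is_RInt_minus _ _ _ _ _ _ HC HD).
    assert (HS := is_RInt_scal _ _ _ (/ (2 * INR (S n))) _ HM).
    assert (Hp : 0 < INR (S n)) by (apply lt_0_INR; lia).
    assert (HK := K_rec n).
    rewrite S_INR in *.
    match type of HS with is_RInt _ _ _ ?l => replace (K (S n)) with l end.
    + eapply is_RInt_ext; [|apply HS].
      intros t _. unfold scal, minus, plus, opp; simpl. unfold mult; simpl.
      match goal with |- ?a = ?b => change (@eq R a b) end. field. lra.
    + symmetry.
      unfold scal, minus, plus, opp; simpl. unfold mult; simpl.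
      match goal with |- ?a = ?b => change (@eq R a b) end.
      rewrite pow1, pow_i by lia. replace (1 + 1 * (1 * 1)) with 2 by ring.
      replace (1 + 0 * (0 * 1)) with 1 by ring. rewrite pow1.
      apply (Rmult_eq_reg_l (2 * (INR n + 1))); [|lra].
      rewrite HK. change (2 ^ S n) with (2 * 2^n). match goal with |- ?a = ?b => change (@eq R a b) end.
      field. split; [apply Rgt_not_eq, pow_lt; lra|lra].
Qed.

Definition P1 (a b t : R) := (1 + t*b)^2 + (t*a)^2.
Definition P2 (a b t : R) := (1 - t*b)^2 + (t*a)^2.
Definition Aff a b t := (ln (P1 a b t) - ln (P2 a b t)) / 2.
Definition Bff a b t := atan (- (t*a) / (1 + t*b)) - atan ((t*a) / (1 - t*b)).
Definition GR a b t := (b * Aff a b t - a * Bff a b t) / (2 * (a^2 + b^2)).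
Definition GI a b t := (a * Aff a b t + b * Bff a b t) / (2 * (a^2 + b^2)).
Definition Dz a b t := (1 + (a^2 - b^2) * t^2)^2 + (2*a*b*t^2)^2.
Definition hR a b t := (1 + (a^2 - b^2) * t^2) / Dz a b t.
Definition hI a b t := - (2*a*b*t^2) / Dz a b t.

Lemma Dz_eq a b t : Dz a b t = P1 a b t * P2 a b t.
Proof. unfold Dz, P1, P2. ring. Qed.

Lemma GR_deriv a b t : 0 < a^2 + b^2 -> 0 < 1 + t*b -> 0 < 1 - t*b ->
  is_derive (GR a b) t (hR a b t).
Proof.
  intros Hab H1 H2.
  unfold GR, Aff, Bff, hR.
  assert (HP1 : 0 < P1 a b t) by (unfold P1; nra).
  assert (HP2 : 0 < P2 a b t) by (unfold P2; nra).
  rewrite Dz_eq. unfold P1, P2 in *.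
  auto_derive.
  - repeat split; lra.
  - match goal with |- ?a = ?b => change (@eq R a b) end.
    field. repeat split; lra.
Qed.

Lemma GI_deriv a b t : 0 < a^2 + b^2 -> 0 < 1 + t*b -> 0 < 1 - t*b ->
  is_derive (GI a b) t (hI a b t).
Proof.
  intros Hab H1 H2.
  unfold GI, Aff, Bff, hI.
  assert (HP1 : 0 < P1 a b t) by (unfold P1; nra).
  assert (HP2 : 0 < P2 a b t) by (unfold P2; nra).
  rewrite Dz_eq. unfold P1, P2 in *.
  auto_derive.
  - repeat split; lra.
  - match goal with |- ?a = ?b => change (@eq R a b) end.
    field. repeat split; lra.
Qed.

Lemma Dz_pos a b t : 0 < 1 + t*b -> 0 < 1 - t*b -> 0 < Dz a b t.
Proof. intros. rewrite Dz_eq. unfold P1, P2. apply Rmult_lt_0_compat; nra. Qed.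

Lemma hR_cont a b t : 0 < 1 + t*b -> 0 < 1 - t*b -> continuous (hR a b) t.
Proof.
  intros H1 H2. assert (HD := Dz_pos a b t H1 H2).
  apply (@ex_derive_continuous R_AbsRing R_NormedModule).
  unfold hR. unfold Dz in *. auto_derive. simpl in HD. lra.
Qed.

Lemma hI_cont a b t : 0 < 1 + t*b -> 0 < 1 - t*b -> continuous (hI a b) t.
Proof.
  intros H1 H2. assert (HD := Dz_pos a b t H1 H2).
  apply (@ex_derive_continuous R_AbsRing R_NormedModule).
  unfold hI. unfold Dz in *. auto_derive. simpl in HD. lra.
Qed.

Lemma tb_pos b t : b^2 < 1 -> 0 <= t <= 1 -> 0 < 1 + t*b /\ 0 < 1 - t*b.
Proof. intros Hb Ht. assert (-1 < b < 1) by (split; nra).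
  assert (0 <= (1-t)*(1-b)) by (apply Rmult_le_pos; lra).
  assert (0 <= (1-t)*(1+b)) by (apply Rmult_le_pos; lra). split; nra. Qed.

Lemma hR_int a b : 0 < a^2 + b^2 -> b^2 < 1 ->
  is_RInt (hR a b) 0 1 (GR a b 1 - GR a b 0).
Proof.
  intros Hab Hb.
  apply (is_RInt_derive (GR a b) (hR a b) 0 1).
  - intros t Ht. rewrite Rmin_left, Rmax_right in Ht by lra.
    destruct (tb_pos b t Hb Ht). apply GR_deriv; auto.
  - intros t Ht. rewrite Rmin_left, Rmax_right in Ht by lra.
    destruct (tb_pos b t Hb Ht). apply hR_cont; auto.
Qed.

Lemma hI_int a b : 0 < a^2 + b^2 -> b^2 < 1 ->
  is_RInt (hI a b) 0 1 (GI a b 1 - GI a b 0).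
Proof.
  intros Hab Hb.
  apply (is_RInt_derive (GI a b) (hI a b) 0 1).
  - intros t Ht. rewrite Rmin_left, Rmax_right in Ht by lra.
    destruct (tb_pos b t Hb Ht). apply GI_deriv; auto.
  - intros t Ht. rewrite Rmin_left, Rmax_right in Ht by lra.
    destruct (tb_pos b t Hb Ht). apply hI_cont; auto.
Qed.

Lemma G_0 a b : GR a b 0 = 0 /\ GI a b 0 = 0.
Proof.
  unfold GR, GI, Aff, Bff, P1, P2.
  replace (- (0*a) / (1 + 0*b)) with 0 by field.
  replace ((0*a) / (1 - 0*b)) with 0 by field.
  rewrite atan_0. split; field_simplify; try reflexivity.
Abort.

Lemma G_0 a b : GR a b 0 = 0 /\ GI a b 0 = 0.
Proof.
  unfold GR, GI, Aff, Bff, P1, P2.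
  replace (- (0*a) / (1 + 0*b)) with 0 by field.
  replace ((0*a) / (1 - 0*b)) with 0 by field.
  replace ((1 + 0*b)^2 + (0*a)^2) with 1 by ring.
  replace ((1 - 0*b)^2 + (0*a)^2) with 1 by ring.
  rewrite atan_0, ln_1. unfold Rdiv. split; ring.
Qed.

Lemma ln_sqrt' x : 0 < x -> ln (sqrt x) = ln x / 2.
Proof.
  intros Hx. assert (Hs : 0 < sqrt x) by (apply sqrt_lt_R0; lra).
  rewrite <- (sqrt_sqrt x) at 2 by lra. rewrite ln_mult by lra. field.
Qed.

Lemma Clog_pos (X Y : R) : 0 < X -> Clog (X, Y) = (ln (X^2 + Y^2) / 2, atan (Y / X)).
Proof.
  intros HX. unfold Clog, Carg, Re, Im. simpl fst. simpl snd.
  destruct (Rlt_dec 0 X); [|lra]. f_equal. unfold Cmod. simpl fst; simpl snd.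
  rewrite ln_sqrt'. reflexivity. nra.
Qed.

Lemma G_1 a b : 0 < a^2 + b^2 -> b^2 < 1 ->
  Cdiv (Catan (a, b)) (a, b) = (GR a b 1, GI a b 1).
Proof.
  intros Hab Hb.
  destruct (tb_pos b 1 Hb) as [H1 H2]; [lra|].
  unfold Catan.
  replace (Cminus (RtoC 1) (Cmult Ci (a, b))) with (1 + b, -a)
    by (apply injective_projections; simpl; ring).
  replace (Cplus (RtoC 1) (Cmult Ci (a, b))) with (1 - b, a)
    by (apply injective_projections; simpl; ring).
  rewrite !Clog_pos by lra. replace ((-a)^2) with (a^2) by ring.
  unfold GR, GI, Aff, Bff, P1, P2. rewrite !Rmult_1_l.
  apply injective_projections; simpl;
  match goal with |- ?a = ?b => change (@eq R a b) end;
  field; lra.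
Qed.

Lemma csqrt_sq (x y : R) : 0 < x ->
  fst (Csqrt (x, y)) ^ 2 - snd (Csqrt (x, y)) ^ 2 = x /\
  2 * fst (Csqrt (x, y)) * snd (Csqrt (x, y)) = y.
Proof.
  intros Hx. unfold Csqrt, Carg, Re, Im. simpl fst; simpl snd.
  destruct (Rlt_dec 0 x) as [Hx0|]; [|lra].
  set (th := atan (y / x)).
  set (r := Cmod (x, y)).
  assert (Hr2 : r * r = x^2 + y^2).
  { unfold r, Cmod. simpl fst; simpl snd. apply sqrt_sqrt. nra. }
  assert (Hr : 0 < r).
  { unfold r, Cmod. simpl fst; simpl snd. apply sqrt_lt_R0. nra. }
  assert (Hsq : sqrt r * sqrt r = r) by (apply sqrt_sqrt; lra).
  assert (Hs : sqrt (1 + (y/x)²) = r / x).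
  { replace (1 + (y/x)²) with ((r/x)²).
    - apply sqrt_Rsqr. apply Rlt_le, Rdiv_lt_0_compat; lra.
    - unfold Rsqr. apply (Rmult_eq_reg_r (x*x)); [|nra]. field_simplify; try lra. }
  assert (Hc : cos th = x / r).
  { unfold th. rewrite cos_atan, Hs. field. split; lra. }
  assert (Hsn : sin th = y / r).
  { unfold th. rewrite sin_atan, Hs. field. split; lra. }
  assert (E1 : cos th = cos (th/2) * cos (th/2) - sin (th/2) * sin (th/2)).
  { rewrite <- cos_2a. f_equal. field. }
  assert (E2 : sin th = 2 * sin (th/2) * cos (th/2)).
  { rewrite <- sin_2a. f_equal. field. }
  split.
  - replace ((sqrt r * cos (th / 2)) ^ 2 - (sqrt r * sin (th / 2)) ^ 2)
      with ((sqrt r * sqrt r) * (cos (th/2) * cos (th/2) - sin (th/2) * sin (th/2))) by ring.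
    rewrite <- E1, Hsq, Hc. field. lra.
  - replace (2 * (sqrt r * cos (th / 2)) * (sqrt r * sin (th / 2)))
      with ((sqrt r * sqrt r) * (2 * sin (th/2) * cos (th/2))) by ring.
    rewrite <- E2, Hsq, Hsn. field. lra.
Qed.

Lemma norm_prod_Cmod (p : R*R) :
  @norm R_AbsRing (prod_NormedModule R_AbsRing R_NormedModule R_NormedModule) p = Cmod p.
Proof.
  unfold norm; simpl. unfold prod_norm, Cmod. simpl.
  assert (E : forall r : R, norm r * (norm r * 1) = r * (r * 1)).
  { intro r. change (norm r) with (Rabs r). rewrite !Rmult_1_r. rewrite <- Rabs_mult.
    apply Rabs_pos_eq. nra. }
  rewrite !E. reflexivity.
Qed.

Fixpoint csm (f : nat -> C) (n : nat) : C :=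
  match n with O => RtoC 0 | S m => Cplus (csm f m) (f m) end.

Lemma csm_fst f n : fst (csm f n) = sm (fun k => fst (f k)) n.
Proof. induction n; simpl; auto. rewrite IHn. reflexivity. Qed.
Lemma csm_snd f n : snd (csm f n) = sm (fun k => snd (f k)) n.
Proof. induction n; simpl; auto. rewrite IHn. reflexivity. Qed.

Lemma sum_n_csm (f : nat -> C) n : sum_n f n = csm f (S n).
Proof.
  induction n.
  - rewrite sum_O. simpl. apply injective_projections; simpl; ring.
  - rewrite sum_Sn, IHn. reflexivity.
Qed.

Lemma is_RInt_sm (f : nat -> R -> R) (l : nat -> R) M :
  (forall n, is_RInt (f n) 0 1 (l n)) ->
  is_RInt (fun t => sm (fun n => f n t) M) 0 1 (sm l M).
Proof.
  intros H. induction M.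
  - simpl. assert (H0 := is_RInt_const 0 1 (0:R)).
    match type of H0 with is_RInt _ _ _ ?v => assert (E : v = 0) end.
    { unfold scal; simpl. unfold mult; simpl. ring. }
    rewrite E in H0. exact H0.
  - simpl. apply (is_RInt_plus _ _ _ _ _ _ IHM (H M)).
Qed.

Definition hC a b t : C := (hR a b t, hI a b t).
Definition uu a b : C := (1 - (a^2 - b^2), - (2*a*b)).
Definition qq a b t : C := Cmult (uu a b) (RtoC (t^2 / (1 + t^2))).

Lemma g_geo n t : g n t = / (1 + t^2) * (t^2 / (1 + t^2)) ^ n.
Proof.
  unfold g. assert (0 < 1 + t^2) by nra.
  rewrite pow_mult. change ((1 + t^2)^(S n)) with ((1+t^2)*(1+t^2)^n).
  unfold Rdiv. rewrite Rpow_mult_distr, pow_inv.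
  assert (0 < (1+t^2)^n) by (apply pow_lt; lra).
  field. lra.
Qed.

Lemma F3 a b t : 0 < Dz a b t ->
  RtoC (/ (1 + t^2)) = Cmult (Cminus (RtoC 1) (qq a b t)) (hC a b t).
Proof.
  intros HD. assert (0 < 1 + t^2) by nra.
  unfold qq, uu, hC, hR, hI. unfold Dz in *.
  apply injective_projections; simpl;
  match goal with |- ?a = ?b => change (@eq R a b) end;
  field; split; lra.
Qed.

Lemma geo a b t M : 0 < Dz a b t ->
  csm (fun n => Cmult (RtoC (g n t)) (Cpow (uu a b) n)) M
  = Cmult (Cminus (RtoC 1) (Cpow (qq a b t) M)) (hC a b t).
Proof.
  intros HD. induction M.
  - simpl. apply injective_projections; simpl; ring.
  - simpl csm. rewrite IHM. rewrite g_geo, RtoC_mult, (F3 a b t) by auto.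
    rewrite RtoC_pow. unfold qq. rewrite !Cpow_mult_l, !Cpow_S. ring.
Qed.

Lemma hC_bound a b t : 0 < a^2 - b^2 -> Cmod (hC a b t) <= 1.
Proof.
  intros Hx. unfold hC, Cmod. simpl fst; simpl snd.
  assert (HD : 1 <= Dz a b t).
  { unfold Dz. assert (0 <= (a^2-b^2) * t^2) by (apply Rmult_le_pos; nra). nra. }
  rewrite <- sqrt_1. apply sqrt_le_1_alt.
  replace (hR a b t ^ 2 + hI a b t ^ 2) with (/ Dz a b t).
  - rewrite <- Rinv_1. apply Rinv_le_contravar; lra.
  - unfold hR, hI. unfold Dz in *. field. lra.
Qed.

Lemma q_bound a b t : Cmod (qq a b t) <= Cmod (uu a b).
Proof.
  unfold qq. rewrite Cmod_mult, Cmod_R.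
  assert (0 <= Cmod (uu a b)) by apply Cmod_ge_0.
  assert (0 < 1 + t^2) by nra.
  assert (Rabs (t^2 / (1 + t^2)) <= 1).
  { rewrite Rabs_pos_eq. apply (Rmult_le_reg_r (1 + t^2)); [lra|].
    field_simplify; lra. apply Rdiv_le_0_compat; nra. }
  rewrite <- (Rmult_1_r (Cmod (uu a b))) at 2. apply Rmult_le_compat_l; auto.
Qed.

Lemma term_eq a b n :
  Cmult (RtoC (coef3p2 n)) (Cpow (Cminus (a^2 - b^2, 2*a*b) (RtoC 1)) n)
  = Cmult (RtoC (K n)) (Cpow (uu a b) n).
Proof.
  rewrite coef_K, RtoC_mult, RtoC_pow.
  replace (uu a b) with (Cmult (RtoC (-1)) (Cminus (a^2 - b^2, 2*a*b) (RtoC 1)))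
    by (apply injective_projections; unfold uu; simpl; ring).
  rewrite Cpow_mult_l. ring.
Qed.

Lemma rem_bound a b N :
  0 < a^2 - b^2 -> b^2 < 1 ->
  Cmod (Cminus (csm (fun n => Cmult (RtoC (K n)) (Cpow (uu a b) n)) (S N))
               (Cdiv (Catan (a, b)) (a, b)))
  <= Cmod (uu a b) ^ (S N).
Proof.
  intros Hx Hb.
  assert (Hab : 0 < a^2 + b^2) by nra.
  set (U := fun n => Cpow (uu a b) n).
  set (rho := fun t => Cminus (hC a b t) (csm (fun n => Cmult (RtoC (g n t)) (U n)) (S N))).
  set (lu := GR a b 1 - GR a b 0 - sm (fun n => K n * fst (U n)) (S N)).
  set (lv := GI a b 1 - GI a b 0 - sm (fun n => K n * snd (U n)) (S N)).
  assert (Hu : is_RInt (fun t => fst (rho t)) 0 1 lu).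
  { apply (is_RInt_ext (fun t => hR a b t - sm (fun n => g n t * fst (U n)) (S N))).
    - intros t _. unfold rho. change (fst (Cminus ?p ?q)) with (fst p - fst q).
      rewrite csm_fst. apply f_equal2; [reflexivity|].
      apply sm_ext. intros k _. simpl. ring.
    - apply (is_RInt_minus _ _ _ _ _ _ (hR_int a b Hab Hb)).
      apply (is_RInt_sm (fun n t => g n t * fst (U n))). intros n.
      apply (is_RInt_ext (fun t => scal (fst (U n)) (g n t))).
      + intros t _. unfold scal; simpl. unfold mult; simpl. ring.
      + replace (K n * fst (U n)) with (scal (fst (U n)) (K n)).
        * exact (@is_RInt_scal R_NormedModule (g n) 0 1 _ (K n) (g_int n)).
        * unfold scal; simpl. unfold mult; simpl. ring. }
  assert (Hv : is_RInt (fun t => snd (rho t)) 0 1 lv).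
  { apply (is_RInt_ext (fun t => hI a b t - sm (fun n => g n t * snd (U n)) (S N))).
    - intros t _. unfold rho. change (snd (Cminus ?p ?q)) with (snd p - snd q).
      rewrite csm_snd. apply f_equal2; [reflexivity|].
      apply sm_ext. intros k _. simpl. ring.
    - apply (is_RInt_minus _ _ _ _ _ _ (hI_int a b Hab Hb)).
      apply (is_RInt_sm (fun n t => g n t * snd (U n))). intros n.
      apply (is_RInt_ext (fun t => scal (snd (U n)) (g n t))).
      + intros t _. unfold scal; simpl. unfold mult; simpl. ring.
      + replace (K n * snd (U n)) with (scal (snd (U n)) (K n)).
        * exact (@is_RInt_scal R_NormedModule (g n) 0 1 _ (K n) (g_int n)).
        * unfold scal; simpl. unfold mult; simpl. ring. }
  assert (Hp := @is_RInt_fct_extend_pair R_NormedModule R_NormedModule rho 0 1 lu lv Hu Hv).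
  set (r := Cmod (uu a b)).
  assert (Hc := is_RInt_const 0 1 (r ^ (S N))).
  assert (Hval : scal (1 - 0) (r ^ S N) = r ^ S N).
  { unfold scal; simpl. unfold mult; simpl. ring. }
  assert (Hbd : Cmod (lu, lv) <= r ^ S N).
  { rewrite <- Hval. rewrite <- norm_prod_Cmod.
    apply (@norm_RInt_le (prod_NormedModule R_AbsRing R_NormedModule R_NormedModule)
      rho (fun _ => r ^ S N) 0 1); [lra| |exact Hp|exact Hc].
    intros t Ht. rewrite norm_prod_Cmod.
    destruct (tb_pos b t Hb Ht) as [H1 H2].
    assert (HD := Dz_pos a b t H1 H2).
    unfold rho. unfold U. rewrite (geo a b t (S N) HD).
    replace (Cminus (hC a b t) (Cmult (Cminus (RtoC 1) (Cpow (qq a b t) (S N))) (hC a b t)))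
      with (Cmult (Cpow (qq a b t) (S N)) (hC a b t)) by ring.
    rewrite Cmod_mult, Cmod_pow.
    assert (H3 := hC_bound a b t Hx). assert (H4 := q_bound a b t).
    assert (0 <= Cmod (qq a b t)) by apply Cmod_ge_0.
    assert (0 <= Cmod (hC a b t)) by apply Cmod_ge_0.
    rewrite <- (Rmult_1_r (r ^ S N)). apply Rmult_le_compat; auto.
    apply pow_le; auto. apply pow_incr; auto. }
  rewrite <- Cmod_opp.
  replace (Copp (Cminus (csm (fun n => Cmult (RtoC (K n)) (U n)) (S N))
               (Cdiv (Catan (a, b)) (a, b)))) with (lu, lv); [exact Hbd|].
  rewrite (G_1 a b Hab Hb). destruct (G_0 a b) as [G0 G1].
  unfold lu, lv. rewrite G0, G1.
  apply injective_projections; simpl; rewrite ?csm_fst, ?csm_snd;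
  [ rewrite (sm_ext (fun k => fst (Cmult (RtoC (K k)) (U k))) (fun n => K n * fst (U n)))
  | rewrite (sm_ext (fun k => snd (Cmult (RtoC (K k)) (U k))) (fun n => K n * snd (U n)))];
  try (intros; simpl; ring); ring.
Qed.

Lemma main_gen a b : (a^2 - b^2 - 1)^2 + (2*a*b)^2 < 1 ->
  is_series (fun n : nat => Cmult (RtoC (coef3p2 n)) (Cpow (Cminus (a^2 - b^2, 2*a*b) (RtoC 1)) n))
            (Cdiv (Catan (a, b)) (a, b)).
Proof.
  intros H.
  assert (Hx : 0 < a^2 - b^2) by nra.
  assert (Hb : b^2 < 1).
  { destruct (Rlt_or_le (b^2) 1) as [|Hb]; auto.
    assert (0 <= a^2) by nra. nra. }
  assert (Hr : Cmod (uu a b) < 1).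
  { unfold uu, Cmod. simpl fst; simpl snd. apply (Rlt_le_trans _ (sqrt 1)); [|rewrite sqrt_1; lra].
    apply sqrt_lt_1_alt. split.
    - apply Rplus_le_le_0_compat; apply pow2_ge_0.
    - match goal with |- ?A < 1 => replace A with ((a^2-b^2-1)^2 + (2*a*b)^2) by ring end.
      exact H. }
  unfold is_series.
  apply (filterlim_locally_ball_norm (K:=C_AbsRing) (U:=C_NormedModule)).
  intros eps.
  assert (Hr0 : Rabs (Cmod (uu a b)) < 1) by (rewrite Rabs_pos_eq; auto; apply Cmod_ge_0).
  destruct (pow_lt_1_zero _ Hr0 eps (cond_pos eps)) as [N0 HN0].
  exists N0. intros n Hn.
  unfold ball_norm.
  change (Cmod (Cminus (sum_n (fun n0 : nat => Cmult (RtoC (coef3p2 n0))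
       (Cpow (Cminus (a ^ 2 - b ^ 2, 2 * a * b) (RtoC 1)) n0)) n) (Cdiv (Catan (a, b)) (a, b))) < eps).
  rewrite (sum_n_ext _ (fun k => Cmult (RtoC (K k)) (Cpow (uu a b) k))) by apply term_eq.
  rewrite sum_n_csm.
  eapply Rle_lt_trans; [apply rem_bound; auto|].
  assert (HH := HN0 (S n) ltac:(lia)).
  rewrite Rabs_pos_eq in HH; auto. apply pow_le, Cmod_ge_0.
Qed.

Theorem theorem3p2 (z : C) (hz : Cmod (Cminus z (RtoC 1)) < 1) :
  is_series (fun n : nat => Cmult (RtoC (coef3p2 n)) (Cpow (Cminus z (RtoC 1)) n))
            (Cdiv (Catan (Csqrt z)) (Csqrt z)).
Proof.
  destruct z as [x y].
  assert (H : (x - 1)^2 + y^2 < 1).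
  { unfold Cmod in hz. simpl fst in hz; simpl snd in hz.
    match type of hz with sqrt ?A < 1 =>
      replace ((x - 1)^2 + y^2) with A by ring;
      destruct (Rlt_or_le A 1) as [|Hc]; auto end.
    apply sqrt_le_1_alt in Hc. rewrite sqrt_1 in Hc. lra. }
  assert (Hx : 0 < x) by nra.
  destruct (csqrt_sq x y Hx) as [E1 E2].
  set (w := Csqrt (x, y)) in *. clearbody w. destruct w as [a b].
  simpl fst in E1, E2; simpl snd in E1, E2.
  subst x y.
  apply main_gen. replace ((a ^ 2 - b ^ 2 - 1) ^ 2 + (2 * a * b) ^ 2) with
     ((a ^ 2 - b ^ 2 - 1) ^ 2 + (2 * a * b) ^ 2) by ring. exact H.
Qed.
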